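(* Fix $t\in\{1,\dots,M\}$. For every $z^*\in F(\mathcal{T}_t)$, the number of active indices of $C_t$ at $z^*$ satisfies $|K_t(z^* )|\in\{1,2\}$.
   Context: Fix reals $W,H>0$, integers $N\ge N_m\ge 2$, and widths $w_i>0$, heights $h_i>0$ for $1\le i\le N_m$. Points of $\mathbb{R}^{2N}$ are written $z=(x,y)$ with $x=(x_1,\dots,x_N)$, $y=(y_1,\dots,y_N)$. For $1\le i\le N_m$ let $B_i^x=\{z: 0\le x_i\le W-w_i\}$, $B_i^y=\{z: 0\le y_i\le H-h_i\}$; for $i\neq j$ let $B_{i,j}=B_i^x\cap B_i^y\cap B_j^x\cap B_j^y$, $O^x_{i,j}=\{z: x_i+w_i\le x_j\}$, $O^y_{i,j}=\{z: y_i+h_i\le y_j\}$. Define the closed convex sets $C_{i,j,\mathsf{L}}=O^x_{i,j}\cap B_{i,j}$, $C_{i,j,\mathsf{R}}=O^x_{j,i}\cap B_{i,j}$, $C_{i,j,\mathsf{B}}=O^y_{i,j}\cap B_{i,j}$, $C_{i,j,\mathsf{A}}=O^y_{j,i}\cap B_{i,j}$ (assumed nonempty) and $C_{i,j}=C_{i,j,\mathsf{L}}\cup C_{i,j,\mathsf{R}}\cup C_{i,j,\mathsf{B}}\cup C_{i,j,\mathsf{A}}$. Enumerate the pairs $1\le i<j\le N_m$ by $t=1,\dots,M$ and write $C_t=C_{i,j}$, $C_{t,k}=C_{i,j,k}$. With the Euclidean norm and $\mathrm{d}(z,C)=\inf_{c\in C}\|z-c\|$: $\mathcal{P}_t(z)=\{c\in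 C_t:\|z-c\|=\mathrm{d}(z,C_t)\}$, $P_{t,k}(z)$ is the unique nearest point of $C_{t,k}$ to $z$; for a fixed $\lambda\in(0,2)$, $\mathcal{T}_t(z)=\{z+\lambda(p-z):p\in\mathcal{P}_t(z)\}$, $F(\mathcal{T}_t)=\{z: z\in\mathcal{T}_t(z)\}$. Active indices: $K_t(z)=\{k\in\{\mathsf{L},\mathsf{R},\mathsf{B},\mathsf{A}\}: P_{t,k}(z)\in\mathcal{P}_t(z)\}$. *)

(* Defs.v *)
From HB Require Import structures.
From mathcomp Require Import all_boot all_order all_algebra.
From mathcomp Require Import boolp classical_sets reals.
Set Implicit Arguments. Unset Strict Implicit. Unset Printing Implicit Defensive.
Import Order.TTheory GRing.Theory Num.Theory.
Local Open Scope ring_scope.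
Local Open Scope classical_set_scope.

(* The four pieces of C_{i,j}: L (left), R (right), B (below), A (above). *)
Inductive side := sL | sR | sB | sA.

Definition side_enc (k : side) : bool * bool :=
  match k with sL => (false,false) | sR => (false,true)
             | sB => (true,false) | sA => (true,true) end.
Definition side_dec (p : bool * bool) : side :=
  match p with (false,false) => sL | (false,true) => sR
             | (true,false) => sB | (true,true) => sA end.
Lemma side_encK : cancel side_enc side_dec. Proof. by case. Qed.
HB.instance Definition _ := Equality.copy side (can_type side_encK).
HB.instance Definition _ := Choice.copy side (can_type side_encK).
HB.instance Definition _ := Countable.copy side (can_type side_encK).
HB.instance Definition _ := Finite.copy side (can_type side_encK).

Section Packing.
Variables (R : realType) (N : nat).

(* A point z = (x, y) of R^{2N}. *)
Definition pt := (('I_N -> R) * ('I_N -> R))%type.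

Definition dnorm (z c : pt) : R :=
  Num.sqrt (\sum_(k < N) (z.1 k - c.1 k) ^+ 2 + \sum_(k < N) (z.2 k - c.2 k) ^+ 2).

Definition dist (z : pt) (C : set pt) : R := inf [set dnorm z c | c in C].

Variables (W H : R) (w h : 'I_N -> R).

Definition Bx (i : 'I_N) : set pt := [set z | 0 <= z.1 i <= W - w i].
Definition By (i : 'I_N) : set pt := [set z | 0 <= z.2 i <= H - h i].
Definition Bij (i j : 'I_N) : set pt := Bx i `&` By i `&` Bx j `&` By j.
Definition Ox (i j : 'I_N) : set pt := [set z | z.1 i + w i <= z.1 j].
Definition Oy (i j : 'I_N) : set pt := [set z | z.2 i + h i <= z.2 j].

Definition Cpiece (i j : 'I_N) (k : side) : set pt :=
  match k with
  | sL => Ox i j `&` Bij i j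
  | sR => Ox j i `&` Bij i j
  | sB => Oy i j `&` Bij i j
  | sA => Oy j i `&` Bij i j
  end.

Definition Cij (i j : 'I_N) : set pt :=
  Cpiece i j sL `|` Cpiece i j sR `|` Cpiece i j sB `|` Cpiece i j sA.

Definition nearest (C : set pt) (z : pt) : set pt :=
  [set c | C c /\ dnorm z c = dist z C].

Definition Pset (i j : 'I_N) (z : pt) : set pt := nearest (Cij i j) z.

Definition is_Pk (i j : 'I_N) (k : side) (z p : pt) : Prop :=
  nearest (Cpiece i j k) z p.

Variable lam : R.

Definition Tset (i j : 'I_N) (z : pt) : set pt :=
  [set ((fun k => z.1 k + lam * (p.1 k - z.1 k)),
        (fun k => z.2 k + lam * (p.2 k - z.2 k))) | p in Pset i j z].

Definition Fix (i j : 'I_N) : set pt := [set z | Tset i j z z].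

Definition Kset (i j : 'I_N) (z : pt) : {set side} :=
  [set k : side | `[< exists p, is_Pk i j k z p /\ Pset i j z p >]].

End Packing.

(* Main.v *)
Require Import Defs.
From HB Require Import structures.
From mathcomp Require Import all_boot all_order all_algebra.
From mathcomp Require Import boolp classical_sets reals.
From mathcomp Require Import lra.
Import Order.TTheory GRing.Theory Num.Theory.
Local Open Scope ring_scope.
Local Open Scope classical_set_scope.

Section Aux.
Variables (R : realType) (N : nat).

Lemma dnorm_ge0 (z c : pt R N) : 0 <= dnorm z c.
Proof. exact: sqrtr_ge0. Qed.

Lemma dnorm_zz (z : pt R N) : dnorm z z = 0.
Proof.
rewrite /dnorm !big1 ?addr0 ?sqrtr0 // => k _; by rewrite subrr expr2 mulr0.
Qed.

Lemma dnorm_eq0 (z c : pt R N) : dnorm z c = 0 -> c = z.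
Proof.
move=> /eqP; rewrite sqrtr_eq0 => Hle.
have H1 : 0 <= \sum_(k < N) (z.1 k - c.1 k) ^+ 2 by apply: sumr_ge0 => k _; exact: sqr_ge0.
have H2 : 0 <= \sum_(k < N) (z.2 k - c.2 k) ^+ 2 by apply: sumr_ge0 => k _; exact: sqr_ge0.
have E1 : \sum_(k < N) (z.1 k - c.1 k) ^+ 2 = 0 by apply/eqP; rewrite eq_le H1 andbT; lra.
have E2 : \sum_(k < N) (z.2 k - c.2 k) ^+ 2 = 0 by apply/eqP; rewrite eq_le H2 andbT; lra.
have F1 := psumr_eq0P (fun k _ => sqr_ge0 (z.1 k - c.1 k)) E1.
have F2 := psumr_eq0P (fun k _ => sqr_ge0 (z.2 k - c.2 k)) E2.
case: c F1 F2 {E1 E2 H1 H2 Hle} => c1 c2 F1 F2; case: z F1 F2 => z1 z2 /= F1 F2.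
congr pair; apply: funext => k.
- by have /eqP := F1 k isT; rewrite sqrf_eq0 subr_eq0 => /eqP.
- by have /eqP := F2 k isT; rewrite sqrf_eq0 subr_eq0 => /eqP.
Qed.

Lemma dist_in (z : pt R N) (C : set (pt R N)) : C z -> dist z C = 0.
Proof.
move=> Cz; rewrite /dist.
have lb : lbound [set dnorm z c | c in C] 0 by move=> _ [c _ <-]; exact: dnorm_ge0.
apply/eqP; rewrite eq_le; apply/andP; split.
- rewrite -(dnorm_zz z); apply: ge_inf; first by exists 0.
  by exists z.
- apply: lb_le_inf => //; by exists (dnorm z z), z.
Qed.

End Aux.
Arguments dist_in {R N z C}.
Arguments dnorm_eq0 {R N z c}.
Arguments dnorm_zz {R N}.

Theorem mainTheorem4 (R : realType) (W H : R) (N Nm : nat)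
  (w h : 'I_N -> R) (lam : R) (i j : 'I_N) :
  0 < W -> 0 < H -> (2 <= Nm)%N -> (Nm <= N)%N ->
  (forall k : 'I_N, (k < Nm)%N -> 0 < w k /\ 0 < h k) ->
  (forall a b : 'I_N, (a < Nm)%N -> (b < Nm)%N -> a != b ->
     forall k : side, Cpiece W H w h a b k !=set0) ->
  0 < lam < 2 ->
  (i < j)%N -> (j < Nm)%N ->
  forall z : pt R N, Fix W H w h lam i j z ->
    #|Kset W H w h i j z| \in [:: 1%N; 2%N].
Proof.
move=> _ _ _ _ Hwh _ /andP[lam0 _] ij jNm z [p [Cp dp] Ep].
have pz : p = z.
  case: p Cp dp Ep => p1 p2 _ _ Ep; case: z Ep => z1 z2 [E1 E2].
  have e : forall a b : R, a + lam * (b - a) = a -> b = a.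
    move=> a b /eqP; rewrite addrC -subr_eq0 addrK mulf_eq0 (gt_eqF lam0) /=.
    by rewrite subr_eq0 => /eqP.
  congr pair; apply: funext => k /=.
  - by apply: e; have := congr1 (fun f => f k) E1.
  - by apply: e; have := congr1 (fun f => f k) E2.
subst p.
have KE : forall k, (k \in Kset W H w h i j z) = `[< Cpiece W H w h i j k z >].
  move=> k; rewrite inE; apply/asboolP/asboolP.
  - move=> [p [[Ck dk] [_ dp']]].
    rewrite (dist_in Cp) in dp'.
    by rewrite -(dnorm_eq0 dp').
  - move=> Ck; exists z; split; split => //; rewrite /= in Ck *.
    by rewrite (dist_in Ck) dnorm_zz.
have iN : (i < Nm)%N by apply: ltn_trans jNm.
have [wi hi] := Hwh i iN; have [wj hj] := Hwh j jNm.
have notLR : ~ (Cpiece W H w h i j sL z /\ Cpiece W H w h i j sR z).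
  move=> [[L _] [Rr _]]; rewrite /Ox /= in L Rr; lra.
have notBA : ~ (Cpiece W H w h i j sB z /\ Cpiece W H w h i j sA z).
  move=> [[L _] [Rr _]]; rewrite /Oy /= in L Rr; lra.
have gt0 : (0 < #|Kset W H w h i j z|)%N.
  apply/card_gt0P.
  case: Cp => [[[C|C]|C]|C]; [exists sL|exists sR|exists sB|exists sA];
    by rewrite KE; apply/asboolP.
have le2 : (#|Kset W H w h i j z| <= 2)%N.
  pose a := if `[< Cpiece W H w h i j sL z >] then sL else sR.
  pose b := if `[< Cpiece W H w h i j sB z >] then sB else sA.
  suff sub : Kset W H w h i j z \subset [set a; b]%SET.
    by apply: leq_trans (subset_leq_card sub) _; rewrite cards2; case: (a != b).
  apply/fintype.subsetP => k; rewrite KE in_set2 => /asboolP Ck.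
  rewrite /a /b; case: k Ck => Ck.
  - by case: (asboolP (Cpiece W H w h i j sL z)).
  - case: (asboolP (Cpiece W H w h i j sL z)) => // CL; exfalso; exact: notLR.
  - by case: (asboolP (Cpiece W H w h i j sB z)); rewrite ?orbT.
  - case: (asboolP (Cpiece W H w h i j sB z)) => CB; rewrite ?orbT //; exfalso; exact: notBA.
rewrite !inE; case: #|_| gt0 le2 => [|[|[|n]]] //.
Qed.
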